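(* Let $\mathcal Y=(Y_n)$ be an increasing sequence of finite subsets of $\Gamma$ with union $\Gamma$, let $(v_n)$ be an inflating sequence for $\mathcal Y$, and let $\mathbf A=(A_n)\in\mathcal S_{\mathcal Y}({\sf BDO}(\Gamma))$. Then the operator $\mathrm{Op}(\mathbf A)=\sum_{n=1}^\infty R_{v_n}A_nP_{Y_n}R_{v_n}^{-1}$ (a strongly convergent series) is band-dominated, i.e. belongs to ${\sf BDO}(\Gamma)$.
   Context: $\Gamma$ is a countable discrete group. For $X\subseteq\Gamma$, $P_X$ is the orthogonal projection of $l^2(\Gamma)$ onto $l^2(X)$. For $r\in\Gamma$, $(L_ru)(t)=u(r^{-1}t)$ and $(R_ru)(t)=u(tr)$ on $l^2(\Gamma)$. ${\sf BDO}(\Gamma)$ is the smallest closed subalgebra of $L(l^2(\Gamma))$ containing all $L_r$ and all multiplication operators $aI$, $a\in l^\infty(\Gamma)$. $\mathcal F_{\mathcal Y}$ is the $C^*$-algebra of bounded sequences $(A_n)$ of operators $A_n$ on $\mathrm{im}\,P_{Y_n}$ (componentwise operations, supremum norm); $\mathcal S_{\mathcal Y}({\sf BDO}(\Gamma))$ is its smallest closed $C^*$-subalgebra containing all $(P_{Y_n}AP_{Y_n})$, $A\in{\sf BDO}(\Gamma)$. A sequence $(v_n)$ in $\Gamma$ is inflating for a sequence of sets $(Z_n)$ if $Z_mv_m^{-1}\cap Z_nv_n^{-1}=\emptyset$ for $m\ne n$ (here $Zv^{-1}=\{zv^{-1}:z\in Z\}$). For every $(A_n)\in\mathcal F_{\mathcal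 Y}$ the series defining $\mathrm{Op}$ converges strongly. *)

(* Defs.v *)
From Stdlib Require Import Reals List Classical ClassicalEpsilon FunctionalExtensionality.
Open Scope R_scope.

Record C := mkC { re : R; im : R }.
Definition C0 : C := mkC 0 0.
Definition Cadd (a b : C) : C := mkC (re a + re b) (im a + im b).
Definition Copp (a : C) : C := mkC (- re a) (- im a).
Definition Cmul (a b : C) : C :=
  mkC (re a * re b - im a * im b) (re a * im b + im a * re b).
Definition Cconj (a : C) : C := mkC (re a) (- im a).
Definition Cnorm2 (a : C) : R := re a * re a + im a * im a.

Record Group := {
  carrier :> Type;
  gmul : carrier -> carrier -> carrier;
  ginv : carrier -> carrier;
  gone : carrier;
  gmul_assoc : forall x y z, gmul x (gmul y z) = gmul (gmul x y) z;
  gmul_1l : forall x, gmul gone x = x;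
  gmul_Vl : forall x, gmul (ginv x) x = gone;
  g_countable : exists f : carrier -> nat, forall x y, f x = f y -> x = y
}.

Section L2.
Variable G : Group.

Definition Vec := G -> C.
Definition vadd (u v : Vec) : Vec := fun t => Cadd (u t) (v t).
Definition vscale (a : C) (u : Vec) : Vec := fun t => Cmul a (u t).
Definition vsub (u v : Vec) : Vec := fun t => Cadd (u t) (Copp (v t)).

Definition sumsq (u : Vec) (l : list G) : R :=
  fold_right (fun t acc => Cnorm2 (u t) + acc) 0 l.

Definition in_l2 (u : Vec) : Prop :=
  exists M, forall l, NoDup l -> sumsq u l <= M.

(** ||u||_2 <= |c| *)
Definition norm_le (u : Vec) (c : R) : Prop :=
  forall l, NoDup l -> sumsq u l <= c * c.

(** operators; only their action on l^2(Gamma) matters *)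
Definition Op := Vec -> Vec.

Definition bounded (A : Op) : Prop :=
  (forall u v a, in_l2 u -> in_l2 v ->
     A (vadd u (vscale a v)) = vadd (A u) (vscale a (A v))) /\
  (forall u, in_l2 u -> in_l2 (A u)) /\
  (exists c, forall u r, in_l2 u -> norm_le u r -> norm_le (A u) (c * r)).

Definition op_eq (A B : Op) : Prop := forall u, in_l2 u -> A u = B u.

Definition op_dist_le (A B : Op) (eps : R) : Prop :=
  forall u r, in_l2 u -> norm_le u r -> norm_le (vsub (A u) (B u)) (eps * r).

Definition Lsh (r : G) : Op := fun u t => u (gmul G (ginv G r) t).
Definition Rsh (r : G) : Op := fun u t => u (gmul G t r).
Definition Mult (a : G -> C) : Op := fun u t => Cmul (a t) (u t).
Definition bounded_fun (a : G -> C) : Prop := exists M, forall t, Cnorm2 (a t) <= M.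

Definition closed_subalg (S : Op -> Prop) : Prop :=
  (forall A, S A -> bounded A) /\
  (forall A B, S A -> S B -> S (fun u => vadd (A u) (B u))) /\
  (forall a A, S A -> S (fun u => vscale a (A u))) /\
  (forall A B, S A -> S B -> S (fun u => A (B u))) /\
  (forall A B, S A -> op_eq A B -> S B) /\
  (forall A, bounded A ->
     (forall eps, eps > 0 -> exists B, S B /\ op_dist_le A B eps) -> S A).

Definition BDO (A : Op) : Prop :=
  forall S, closed_subalg S ->
    (forall r, S (Lsh r)) ->
    (forall a, bounded_fun a -> S (Mult a)) -> S A.

(** finite subsets of Gamma are represented by duplicate-free lists *)
Definition supp_in (u : Vec) (l : list G) : Prop := forall t, ~ In t l -> u t = C0.

Definition Proj (l : list G) : Op :=
  fun u t => if excluded_middle_informative (In t l) then u t else C0.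

Definition inner (u v : Vec) (l : list G) : C :=
  fold_right (fun t acc => Cadd (Cmul (u t) (Cconj (v t))) acc) C0 l.

(** a sequence (A_n); A_n is only considered on im P_{Y_n} *)
Definition SeqOp := nat -> Op.

Definition in_F (Y : nat -> list G) (A : SeqOp) : Prop :=
  (forall n u, supp_in u (Y n) -> supp_in (A n u) (Y n)) /\
  (forall n u v a, supp_in u (Y n) -> supp_in v (Y n) ->
     A n (vadd u (vscale a v)) = vadd (A n u) (vscale a (A n v))) /\
  (exists M, forall n u, supp_in u (Y n) ->
     sumsq (A n u) (Y n) <= M * sumsq u (Y n)).

Definition seq_eq (Y : nat -> list G) (A B : SeqOp) : Prop :=
  forall n u, supp_in u (Y n) -> A n u = B n u.

Definition seq_dist_le (Y : nat -> list G) (A B : SeqOp) (eps : R) : Prop :=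
  forall n u, supp_in u (Y n) ->
    sumsq (vsub (A n u) (B n u)) (Y n) <= eps * eps * sumsq u (Y n).

Definition is_adj (Y : nat -> list G) (A A' : SeqOp) : Prop :=
  forall n u v, supp_in u (Y n) -> supp_in v (Y n) ->
    inner (A n u) v (Y n) = inner u (A' n v) (Y n).

Definition cstar_subalg (Y : nat -> list G) (S : SeqOp -> Prop) : Prop :=
  (forall A, S A -> in_F Y A) /\
  (forall A B, S A -> S B -> S (fun n u => vadd (A n u) (B n u))) /\
  (forall a A, S A -> S (fun n u => vscale a (A n u))) /\
  (forall A B, S A -> S B -> S (fun n u => A n (B n u))) /\
  (forall A A', S A -> in_F Y A' -> is_adj Y A A' -> S A') /\
  (forall A B, S A -> seq_eq Y A B -> S B) /\
  (forall A, in_F Y A ->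
     (forall eps, eps > 0 -> exists B, S B /\ seq_dist_le Y A B eps) -> S A).

Definition S_Y_BDO (Y : nat -> list G) (A : SeqOp) : Prop :=
  forall S, cstar_subalg Y S ->
    (forall B, BDO B -> S (fun n u => Proj (Y n) (B (Proj (Y n) u)))) -> S A.

Definition inflating (v : nat -> G) (Z : nat -> list G) : Prop :=
  forall m n, m <> n -> forall z1 z2, In z1 (Z m) -> In z2 (Z n) ->
    gmul G z1 (ginv G (v m)) <> gmul G z2 (ginv G (v n)).

(** n-th term R_{v_n} A_n P_{Y_n} R_{v_n}^{-1}; R_{v}^{-1} = R_{v^{-1}} *)
Definition Op_term (Y : nat -> list G) (v : nat -> G) (A : SeqOp) (n : nat) : Op :=
  fun u => Rsh (v n) (A n (Proj (Y n) (Rsh (ginv G (v n)) u))).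

Fixpoint psum (T : nat -> Op) (m : nat) : Op :=
  match m with
  | O => fun _ _ => C0
  | S k => fun u => vadd (psum T k u) (T k u)
  end.

Definition strong_sum (T : nat -> Op) (B : Op) : Prop :=
  forall u, in_l2 u -> forall eps, eps > 0 ->
    exists N, forall m, (N <= m)%nat -> norm_le (vsub (B u) (psum T m u)) eps.

End L2.

(* Main.v *)
Require Import Defs.
From Stdlib Require Import Reals List Lra Lia Classical ClassicalEpsilon FunctionalExtensionality Permutation.
Open Scope R_scope.
Open Scope bool_scope.

Lemma C_ext (a b : Defs.C) : re a = re b -> im a = im b -> a = b.
Proof. destruct a, b; simpl; intros; subst; reflexivity. Qed.

Ltac Csolve := apply C_ext; simpl; ring.

Definition C1 : Defs.C := mkC 1 0.

Lemma Cnorm2_nonneg a : 0 <= Cnorm2 a.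
Proof. unfold Cnorm2; nra. Qed.

Lemma Cnorm2_mul a b : Cnorm2 (Cmul a b) = Cnorm2 a * Cnorm2 b.
Proof. destruct a, b; unfold Cnorm2; simpl; ring. Qed.

Lemma Cnorm2_conj a : Cnorm2 (Cconj a) = Cnorm2 a.
Proof. destruct a; unfold Cnorm2; simpl; ring. Qed.

Lemma Cnorm2_C0 : Cnorm2 C0 = 0.
Proof. unfold Cnorm2; simpl; ring. Qed.

Lemma Cnorm2_add_le a b : Cnorm2 (Cadd a b) <= 2 * Cnorm2 a + 2 * Cnorm2 b.
Proof. destruct a as [re0 im0], b as [re1 im1]; unfold Cnorm2; simpl.
  pose proof (Rle_0_sqr (re0 - re1)); pose proof (Rle_0_sqr (im0 - im1)); unfold Rsqr in *; nra. Qed.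

Lemma Cnorm2_sub_le a b : Cnorm2 (Cadd a (Copp b)) <= 2 * Cnorm2 a + 2 * Cnorm2 b.
Proof. destruct a as [re0 im0], b as [re1 im1]; unfold Cnorm2; simpl.
  pose proof (Rle_0_sqr (re0 + re1)); pose proof (Rle_0_sqr (im0 + im1)); unfold Rsqr in *; nra. Qed.

Section SS.
Context {G : Group}.

Lemma sumsq_nonneg (u : Vec G) l : 0 <= sumsq G u l.
Proof. induction l; simpl; [lra|]. pose proof (Cnorm2_nonneg (u a)); lra. Qed.

Lemma sumsq_app (u : Vec G) l1 l2 : sumsq G u (l1 ++ l2) = sumsq G u l1 + sumsq G u l2.
Proof. induction l1; simpl; [lra|]. rewrite IHl1; lra. Qed.

Lemma sumsq_perm (u : Vec G) l1 l2 : Permutation l1 l2 -> sumsq G u l1 = sumsq G u l2.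
Proof. induction 1; simpl; lra. Qed.

Lemma sumsq_ext (u w : Vec G) l : (forall t, In t l -> Cnorm2 (u t) = Cnorm2 (w t)) ->
  sumsq G u l = sumsq G w l.
Proof. induction l; simpl; intros H; [lra|]. rewrite H, IHl; auto. Qed.

Lemma sumsq_le (u w : Vec G) l : (forall t, In t l -> Cnorm2 (u t) <= Cnorm2 (w t)) ->
  sumsq G u l <= sumsq G w l.
Proof. induction l; simpl; intros H; [lra|]. pose proof (H a (or_introl eq_refl)).
  assert (sumsq G u l <= sumsq G w l) by auto. lra. Qed.

Lemma sumsq_filter (u : Vec G) (p : G -> bool) l :
  sumsq G u l = sumsq G u (filter p l) + sumsq G u (filter (fun x => negb (p x)) l).
Proof. induction l; simpl; [lra|]. destruct (p a); simpl; rewrite IHl; lra. Qed.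

Lemma sumsq_zero (u : Vec G) l : (forall t, In t l -> u t = C0) -> sumsq G u l = 0.
Proof. induction l; simpl; intros H; [lra|]. rewrite H, IHl, Cnorm2_C0; auto; lra. Qed.

Definition inb (l : list G) (x : G) : bool :=
  if excluded_middle_informative (In x l) then true else false.

Lemma inb_spec l x : inb l x = true <-> In x l.
Proof. unfold inb; destruct excluded_middle_informative; split; intros; congruence || tauto. Qed.

Lemma sumsq_incl (u : Vec G) l1 l2 : NoDup l1 -> NoDup l2 -> incl l1 l2 ->
  sumsq G u l1 <= sumsq G u l2.
Proof.
  intros N1 N2 I. rewrite (sumsq_filter u (inb l1) l2).
  pose proof (sumsq_nonneg u (filter (fun x => negb (inb l1 x)) l2)).
  assert (sumsq G u l1 = sumsq G u (filter (inb l1) l2)); [|lra].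
  apply sumsq_perm. apply NoDup_Permutation; auto.
  - apply NoDup_filter; auto.
  - intros x; rewrite filter_In, inb_spec; split; [intros; split; auto|tauto].
Qed.

Lemma sumsq_supp (u : Vec G) l L : NoDup l -> NoDup L -> supp_in G u L ->
  sumsq G u l <= sumsq G u L.
Proof.
  intros Nl NL Hs. rewrite (sumsq_filter u (inb L) l).
  rewrite (sumsq_zero u (filter (fun x => negb (inb L x)) l)).
  - rewrite Rplus_0_r. apply sumsq_incl; auto. apply NoDup_filter; auto.
    intros x; rewrite filter_In, inb_spec; tauto.
  - intros t; rewrite filter_In. intros [_ H]. apply Hs. intros Hin.
    apply inb_spec in Hin. rewrite Hin in H. discriminate.
Qed.

Lemma sumsq_vadd_le (u w : Vec G) l : sumsq G (vadd G u w) l <= 2 * sumsq G u l + 2 * sumsq G w l.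
Proof. induction l; simpl; [lra|]. pose proof (Cnorm2_add_le (u a) (w a)). unfold vadd in *. lra. Qed.

Lemma sumsq_vsub_le (u w : Vec G) l : sumsq G (vsub G u w) l <= 2 * sumsq G u l + 2 * sumsq G w l.
Proof. induction l; simpl; [lra|]. pose proof (Cnorm2_sub_le (u a) (w a)). unfold vsub in *. lra. Qed.

Lemma sumsq_vscale (a : Defs.C) (u : Vec G) l : sumsq G (vscale G a u) l = Cnorm2 a * sumsq G u l.
Proof. induction l; simpl; [lra|]. unfold vscale in *. rewrite IHl, Cnorm2_mul. lra. Qed.

End SS.

Section GR.
Variable G : Group.
Notation "x * y" := (gmul G x y).
Notation "x ^-1" := (ginv G x) (at level 2).
Notation "1" := (gone G).

Lemma g_mulVr x : x * x^-1 = 1.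
Proof.
  rewrite <- (gmul_1l G (x * x^-1)).
  rewrite <- (gmul_Vl G (x^-1)) at 1.
  rewrite <- gmul_assoc. rewrite (gmul_assoc G (x^-1) x (x^-1)), gmul_Vl, gmul_1l.
  apply gmul_Vl.
Qed.

Lemma g_mul1r x : x * 1 = x.
Proof. rewrite <- (gmul_Vl G x), gmul_assoc, g_mulVr, gmul_1l. reflexivity. Qed.

Lemma g_invinv x : (x^-1)^-1 = x.
Proof.
  rewrite <- (g_mul1r ((x^-1)^-1)), <- (gmul_Vl G x), gmul_assoc, gmul_Vl, gmul_1l. reflexivity.
Qed.

Lemma g_cancel_l a x y : a * x = a * y -> x = y.
Proof.
  intros H. rewrite <- (gmul_1l G x), <- (gmul_1l G y), <- (gmul_Vl G a), <- !gmul_assoc, H. reflexivity.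
Qed.

Lemma g_cancel_r a x y : x * a = y * a -> x = y.
Proof.
  intros H. rewrite <- (g_mul1r x), <- (g_mul1r y), <- (g_mulVr a), !gmul_assoc, H. reflexivity.
Qed.

Lemma g_mulKr x a : (x * a^-1) * a = x.
Proof. rewrite <- gmul_assoc, gmul_Vl, g_mul1r. reflexivity. Qed.

Lemma g_mulKr' x a : (x * a) * a^-1 = x.
Proof. rewrite <- gmul_assoc, g_mulVr, g_mul1r. reflexivity. Qed.

Lemma g_mulKl x a : a^-1 * (a * x) = x.
Proof. rewrite gmul_assoc, gmul_Vl, gmul_1l. reflexivity. Qed.

Lemma g_mulKl' x a : a * (a^-1 * x) = x.
Proof. rewrite gmul_assoc, g_mulVr, gmul_1l. reflexivity. Qed.

Lemma g_invM a b : (a * b)^-1 = b^-1 * a^-1.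
Proof.
  apply (g_cancel_l (a * b)). rewrite g_mulVr, <- gmul_assoc, (gmul_assoc G b), g_mulVr, gmul_1l, g_mulVr.
  reflexivity.
Qed.

Lemma g_inv1 : 1^-1 = 1.
Proof. rewrite <- (gmul_1l G (1^-1)). apply g_mulVr. Qed.

End GR.

Lemma NoDup_map_inj {A B} (f : A -> B) l : (forall x y, f x = f y -> x = y) -> NoDup l -> NoDup (map f l).
Proof.
  intros Hf; induction 1; simpl; constructor; auto.
  intros Hin; apply in_map_iff in Hin; destruct Hin as [y [E Hy]]. apply Hf in E; subst; auto.
Qed.

Lemma sumsq_map {G : Group} (u : Vec G) (f : G -> G) l : sumsq G u (map f l) = sumsq G (fun t => u (f t)) l.
Proof. induction l; simpl; [lra|]. rewrite IHl; lra. Qed.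

Lemma sumsq_filter2 {G : Group} (u : Vec G) (p q : G -> bool) l :
  sumsq G u (filter p l) = sumsq G u (filter (fun x => p x && q x) l) + sumsq G u (filter (fun x => p x && negb (q x)) l).
Proof. induction l; simpl; [lra|]. destruct (p a), (q a); simpl; rewrite IHl; lra. Qed.

Section Main.
Context (G : Group) (Y : nat -> list G) (v : nat -> G)
  (hY_nodup : forall n, NoDup (Y n)) (hv : inflating G v Y).

Notation "x ** y" := (gmul G x y) (at level 40, left associativity).
Notation "x ^-1" := (ginv G x) (at level 2).

Definition Xl n : list G := map (fun y => y ** (v n)^-1) (Y n).

Lemma Xl_spec n t : In t (Xl n) <-> In (t ** v n) (Y n).
Proof.
  unfold Xl; rewrite in_map_iff; split.
  - intros [y [E H]]; subst. rewrite g_mulKr; auto.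
  - intros H; exists (t ** v n); split; auto. apply g_mulKr'.
Qed.

Lemma Xl_nodup n : NoDup (Xl n).
Proof. apply NoDup_map_inj; auto. intros x y H. apply (g_cancel_r G) in H; auto. Qed.

Lemma region_uniq t m n : In (t ** v m) (Y m) -> In (t ** v n) (Y n) -> m = n.
Proof.
  intros H1 H2. destruct (Nat.eq_dec m n) as [|Hne]; auto. exfalso.
  apply (hv m n Hne _ _ H1 H2). rewrite !g_mulKr'. reflexivity.
Qed.

Definition region (t : G) : option nat :=
  match excluded_middle_informative (exists n, In (t ** v n) (Y n)) with
  | left H => Some (proj1_sig (constructive_indefinite_description _ H))
  | right _ => None
  end.

Lemma region_spec t n : region t = Some n <-> In (t ** v n) (Y n).
Proof.
  unfold region; destruct excluded_middle_informative as [H|H].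
  - destruct (constructive_indefinite_description _ H) as [m Hm]; simpl.
    split; [intros E; inversion E; subst; auto|]. intros Hn. f_equal. eapply region_uniq; eauto.
  - split; [discriminate|]. intros Hn; exfalso; apply H; eauto.
Qed.

Lemma region_None t : region t = None -> forall n, ~ In (t ** v n) (Y n).
Proof. intros E n Hn. apply region_spec in Hn. congruence. Qed.

Lemma region_shift s n : In s (Y n) -> region (s ** (v n)^-1) = Some n.
Proof. intros H; apply region_spec. rewrite g_mulKr; auto. Qed.

Definition OpS (A : SeqOp G) : Op G := fun u t =>
  match region t with
  | Some n => A n (Proj G (Y n) (Rsh G ((v n)^-1) u)) (t ** v n)
  | None => C0
  end.

Definition sbound (A : SeqOp G) (K : R) : Prop :=
  forall n u, supp_in G u (Y n) -> supp_in G (A n u) (Y n) /\ sumsq G (A n u) (Y n) <= K * sumsq G u (Y n).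

Definition regb (N : list nat) (t : G) : bool :=
  match region t with Some n => if in_dec Nat.eq_dec n N then true else false | None => false end.

Definition isn (n : nat) (t : G) : bool :=
  match region t with Some m => Nat.eqb m n | None => false end.

Lemma Proj_in l (u : Vec G) t : In t l -> Proj G l u t = u t.
Proof. unfold Proj; destruct excluded_middle_informative; tauto. Qed.

Lemma Proj_out l (u : Vec G) t : ~ In t l -> Proj G l u t = C0.
Proof. unfold Proj; destruct excluded_middle_informative; tauto. Qed.

Lemma Proj_supp l (u : Vec G) : supp_in G (Proj G l u) l.
Proof. intros t Ht; apply Proj_out; auto. Qed.

Lemma sumsq_Proj l L (u : Vec G) : incl L l -> sumsq G (Proj G l u) L = sumsq G u L.
Proof. intros I; apply sumsq_ext; intros t Ht; rewrite Proj_in; auto. Qed.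

Lemma piece_bound A K u l n : sbound A K -> NoDup l ->
  sumsq G (OpS A u) (filter (isn n) l) <= K * sumsq G u (Xl n).
Proof.
  intros HA Hl. set (w := Proj G (Y n) (Rsh G ((v n)^-1) u)).
  assert (E : sumsq G (OpS A u) (filter (isn n) l) = sumsq G (A n w) (map (fun t => t ** v n) (filter (isn n) l))).
  { rewrite sumsq_map. apply sumsq_ext. intros t Ht. apply filter_In in Ht as [_ Ht].
    unfold isn in Ht. unfold OpS. destruct (region t) as [m|]; [|discriminate].
    apply Nat.eqb_eq in Ht; subst. reflexivity. }
  rewrite E. destruct (HA n w (Proj_supp _ _)) as [Hs Hb].
  apply Rle_trans with (sumsq G (A n w) (Y n)). apply sumsq_supp; auto.
  - apply NoDup_map_inj. intros x y H; apply (g_cancel_r G) in H; auto. apply NoDup_filter; auto.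
  - eapply Rle_trans; [apply Hb|]. right. f_equal. unfold w. rewrite sumsq_Proj; [|apply incl_refl].
    unfold Xl. rewrite sumsq_map. reflexivity.
Qed.

Lemma concat_Xl_nodup N : NoDup N -> NoDup (concat (map Xl N)).
Proof.
  induction 1; simpl; [constructor|]. apply NoDup_app; auto. apply Xl_nodup.
  intros t H1 H2. apply in_concat in H2. destruct H2 as [L [HL Ht]].
  apply in_map_iff in HL. destruct HL as [m [E Hm]]; subst.
  apply Xl_spec in H1. apply Xl_spec in Ht. assert (x = m) by (eapply region_uniq; eauto). subst; auto.
Qed.

Lemma OpS_norm_N A K u l N : sbound A K -> 0 <= K -> NoDup l -> NoDup N ->
  sumsq G (OpS A u) (filter (regb N) l) <= K * sumsq G u (concat (map Xl N)).
Proof.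
  intros HA HK Hl HN. induction HN as [|n N Hn HN IH]; simpl.
  - assert (E : filter (regb nil) l = nil).
    { clear Hl; induction l; simpl; auto. unfold regb at 1. destruct (region a); simpl; auto. }
    rewrite E; simpl; lra.
  - rewrite sumsq_app, (sumsq_filter2 _ _ (isn n)).
    rewrite (filter_ext (fun x => regb (n :: N) x && isn n x) (isn n)).
    2:{ intros t; unfold regb, isn. destruct (region t) as [m|]; auto.
        destruct (Nat.eqb_spec m n); subst.
        - destruct in_dec as [i|i]; simpl; auto. exfalso; apply i; left; auto.
        - destruct in_dec; reflexivity. }
    rewrite (filter_ext (fun x => regb (n :: N) x && negb (isn n x)) (regb N)).
    2:{ intros t; unfold regb, isn. destruct (region t) as [m|]; auto.
        destruct (Nat.eqb_spec m n); subst.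
        - destruct (in_dec Nat.eq_dec n (n :: N)); destruct (in_dec Nat.eq_dec n N); simpl; auto; contradiction.
        - destruct (in_dec Nat.eq_dec m (n :: N)) as [i|i]; destruct (in_dec Nat.eq_dec m N) as [j|j]; simpl; auto.
          + destruct i; [congruence|contradiction].
          + exfalso; apply i; right; auto. }
    pose proof (piece_bound A K u l n HA Hl). lra.
Qed.

Lemma OpS_norm_gen A K u l N : sbound A K -> 0 <= K -> NoDup l -> NoDup N ->
  (forall t, In t l -> regb N t = false -> OpS A u t = C0) ->
  sumsq G (OpS A u) l <= K * sumsq G u (concat (map Xl N)).
Proof.
  intros HA HK Hl HN H0. rewrite (sumsq_filter _ (regb N) l).
  rewrite (sumsq_zero _ (filter (fun x => negb (regb N x)) l)).
  - rewrite Rplus_0_r. apply OpS_norm_N; auto.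
  - intros t Ht; apply filter_In in Ht as [Ht Hb]. apply H0; auto. destruct (regb N t); auto.
Qed.

Definition regs (l : list G) : list nat :=
  nodup Nat.eq_dec (flat_map (fun t => match region t with Some n => n :: nil | None => nil end) l).

Lemma OpS_norm_all A K u l R0 : sbound A K -> 0 <= K -> NoDup l ->
  (forall N, NoDup N -> sumsq G u (concat (map Xl N)) <= R0) ->
  sumsq G (OpS A u) l <= K * R0.
Proof.
  intros HA HK Hl Hu. eapply Rle_trans.
  - apply (OpS_norm_gen A K u l (regs l)); auto. apply NoDup_nodup.
    intros t Ht Hr. unfold regb in Hr. unfold OpS. destruct (region t) as [n|] eqn:E; auto.
    destruct in_dec as [i|i]; [discriminate|]. exfalso; apply i. unfold regs.
    apply nodup_In. apply in_flat_map. exists t; split; auto. rewrite E; left; auto.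
  - apply Rmult_le_compat_l; auto. apply Hu. apply NoDup_nodup.
Qed.

Lemma norm_le_concat (u : Vec G) r N : norm_le G u r -> NoDup N -> sumsq G u (concat (map Xl N)) <= r * r.
Proof. intros H HN; apply H. apply concat_Xl_nodup; auto. Qed.

Definition slin (A : SeqOp G) : Prop := forall n u w a, supp_in G u (Y n) -> supp_in G w (Y n) ->
  A n (vadd G u (vscale G a w)) = vadd G (A n u) (vscale G a (A n w)).

Lemma OpS_lin A u w a : slin A ->
  OpS A (vadd G u (vscale G a w)) = vadd G (OpS A u) (vscale G a (OpS A w)).
Proof.
  intros HA. apply functional_extensionality; intros t.
  transitivity (Cadd (OpS A u t) (Cmul a (OpS A w t))); [|reflexivity]. unfold OpS.
  destruct (region t) as [n|].
  - assert (E : Proj G (Y n) (Rsh G (v n)^-1 (vadd G u (vscale G a w))) =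
                vadd G (Proj G (Y n) (Rsh G (v n)^-1 u)) (vscale G a (Proj G (Y n) (Rsh G (v n)^-1 w)))).
    { apply functional_extensionality; intros s. unfold vadd, vscale, Proj, Rsh.
      destruct excluded_middle_informative; auto. Csolve. }
    rewrite E, HA by apply Proj_supp. reflexivity.
  - Csolve.
Qed.

Lemma OpS_bounded A K : sbound A K -> 0 <= K -> slin A -> Defs.bounded G (OpS A).
Proof.
  intros HA HK HL. split; [|split].
  - intros; apply OpS_lin; auto.
  - intros u [M HM]. exists (K * M). intros l Hl. apply OpS_norm_all; auto.
    intros N HN; apply HM. apply concat_Xl_nodup; auto.
  - exists (K + 1). intros u r Hu Hr l Hl.
    eapply Rle_trans. apply (OpS_norm_all A K u l (r * r)); auto.
    intros N HN; apply norm_le_concat; auto.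
    assert (0 <= r * r) by nra. nra.
Qed.

Definition sdiff (A B : SeqOp G) : SeqOp G := fun n x => vsub G (A n x) (B n x).

Definition ssupp (A : SeqOp G) : Prop := forall n u, supp_in G u (Y n) -> supp_in G (A n u) (Y n).

Lemma OpS_sub A B u : vsub G (OpS A u) (OpS B u) = OpS (sdiff A B) u.
Proof.
  apply functional_extensionality; intros t. unfold OpS, vsub, sdiff.
  destruct (region t); auto. Csolve.
Qed.

Lemma OpS_dist A B eps : ssupp A -> ssupp B -> seq_dist_le G Y A B eps ->
  op_dist_le G (OpS A) (OpS B) eps.
Proof.
  intros HA HB Hd u r Hu Hr l Hl. rewrite OpS_sub.
  assert (Hs : sbound (sdiff A B) (eps * eps)).
  { intros n x Hx. split; [|apply Hd; auto].
    intros t Ht. unfold sdiff, vsub. rewrite (HA n x Hx t Ht), (HB n x Hx t Ht). Csolve. }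
  eapply Rle_trans. apply (OpS_norm_all _ _ u l (r * r) Hs); auto.
  apply Rle_0_sqr. intros N HN; apply norm_le_concat; auto. right; ring.
Qed.

Lemma inF_sbound A : in_F G Y A -> exists K, 0 < K /\ sbound A K.
Proof.
  intros [Hs [_ [M HM]]]. exists (Rabs M + 1). split. pose proof (Rabs_pos M); lra.
  intros n u Hu; split; auto. eapply Rle_trans; [apply HM; auto|].
  pose proof (sumsq_nonneg u (Y n)). pose proof (Rle_abs M). nra.
Qed.

Lemma inF_slin A : in_F G Y A -> slin A.
Proof. intros [_ [H _]] n u w a; apply H. Qed.

Lemma inF_ssupp A : in_F G Y A -> ssupp A.
Proof. intros [H _]; exact H. Qed.

Lemma Op_term_eq A k u t : Op_term G Y v A k u t = A k (Proj G (Y k) (Rsh G ((v k)^-1) u)) (t ** v k).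
Proof. reflexivity. Qed.

Lemma Op_term_zero A k u t : ssupp A -> region t <> Some k -> Op_term G Y v A k u t = C0.
Proof.
  intros HA Hr. rewrite Op_term_eq. apply (HA k _ (Proj_supp _ _)). intros H. apply Hr.
  apply region_spec; auto.
Qed.

Lemma psum_eq A m u t : ssupp A ->
  psum G (Op_term G Y v A) m u t =
  match region t with Some n => if Nat.ltb n m then OpS A u t else C0 | None => C0 end.
Proof.
  intros HA. induction m; simpl.
  - destruct (region t); auto.
  - unfold vadd. rewrite IHm. destruct (region t) as [n|] eqn:E.
    + destruct (Nat.ltb_spec n m); destruct (Nat.ltb_spec n (S m)); try lia.
      * rewrite Op_term_zero; auto. Csolve. rewrite E; intros HH; inversion HH; lia.
      * assert (n = m) by lia; subst. unfold OpS; rewrite E. rewrite <- Op_term_eq. Csolve.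
      * rewrite Op_term_zero; auto. Csolve. rewrite E; intros HH; inversion HH; lia.
    + rewrite Op_term_zero; auto. Csolve. rewrite E; discriminate.
Qed.

Definition stail (A : SeqOp G) (m : nat) : SeqOp G :=
  fun n => if Nat.ltb n m then (fun _ _ => C0) else A n.

Lemma vsub_psum A m u : ssupp A ->
  vsub G (OpS A u) (psum G (Op_term G Y v A) m u) = OpS (stail A m) u.
Proof.
  intros HA. apply functional_extensionality; intros t. unfold vsub. rewrite psum_eq; auto.
  unfold OpS, stail. destruct (region t) as [n|]; [|Csolve].
  destruct (Nat.ltb n m); Csolve.
Qed.

Lemma stail_sbound A K m : sbound A K -> 0 <= K -> sbound (stail A m) K.
Proof.
  intros HA HK n u Hu. unfold stail. destruct (Nat.ltb n m); auto.
  split. intros t _; auto. simpl. rewrite (sumsq_zero (fun _ : G => C0)); auto.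
  pose proof (sumsq_nonneg u (Y n)). nra.
Qed.

Lemma l2_tail (u : Vec G) delta : in_l2 G u -> delta > 0 ->
  exists m, forall N, NoDup N -> (forall n, In n N -> (m <= n)%nat) ->
    sumsq G u (concat (map Xl N)) <= delta.
Proof.
  intros [M HM] Hd.
  set (E := fun x => exists l, NoDup l /\ x = sumsq G u l).
  destruct (completeness E) as [s [Hub Hlub]].
  { exists M. intros x [l [Hl ->]]. apply HM; auto. }
  { exists 0. exists nil. split; [constructor|reflexivity]. }
  assert (Hex : exists l0, NoDup l0 /\ sumsq G u l0 > s - delta).
  { apply NNPP. intros Hn. assert (s <= s - delta); [|lra]. apply Hlub. intros x [l [Hl ->]].
    apply Rnot_gt_le. intros Hg. apply Hn. exists l; auto. }
  destruct Hex as [l0 [Hl0 Hs0]].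
  exists (S (fold_right max 0%nat (regs l0))). intros N HN Hge.
  assert (Hdis : NoDup (l0 ++ concat (map Xl N))).
  { apply NoDup_app; auto. apply concat_Xl_nodup; auto.
    intros t H1 H2. apply in_concat in H2. destruct H2 as [L [HL Ht]].
    apply in_map_iff in HL. destruct HL as [n [<- Hn]]. apply Xl_spec in Ht.
    apply region_spec in Ht. specialize (Hge n Hn).
    assert (In n (regs l0)).
    { unfold regs. apply nodup_In, in_flat_map. exists t; split; auto. rewrite Ht; left; auto. }
    assert (forall k L, In k L -> (k <= fold_right max 0 L)%nat).
    { induction L; simpl; [tauto|]. intros [->|HH]; [lia|]. specialize (IHL HH); lia. }
    specialize (H0 n (regs l0) H). lia. }
  assert (sumsq G u (l0 ++ concat (map Xl N)) <= s) by (apply Hub; eexists; split; eauto).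
  rewrite sumsq_app in H. lra.
Qed.

Lemma strong_sum_OpS A : in_F G Y A -> strong_sum G (Op_term G Y v A) (OpS A).
Proof.
  intros HF u Hu eps Heps. destruct (inF_sbound A HF) as [K [HK HA]].
  assert (Hss := inF_ssupp A HF).
  destruct (l2_tail u (eps * eps / K) Hu) as [m Hm].
  { apply Rdiv_lt_0_compat; nra. }
  exists m. intros m' Hm' l Hl. rewrite vsub_psum; auto.
  eapply Rle_trans.
  - apply (OpS_norm_gen (stail A m') K u l (filter (fun n => Nat.leb m' n) (regs l))); auto.
    apply stail_sbound; [exact HA|lra]. lra. apply NoDup_filter, NoDup_nodup.
    intros t Ht Hr. unfold OpS, stail. unfold regb in Hr. destruct (region t) as [n|] eqn:E; auto.
    destruct (Nat.ltb_spec n m'); auto. exfalso.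
    destruct in_dec as [i|i]; [discriminate|]. apply i. apply filter_In; split.
    + unfold regs. apply nodup_In, in_flat_map. exists t; split; auto. rewrite E; left; auto.
    + apply Nat.leb_le; lia.
  - assert (sumsq G u (concat (map Xl (filter (fun n => Nat.leb m' n) (regs l)))) <= eps * eps / K).
    { apply Hm. apply NoDup_filter, NoDup_nodup. intros n Hn. apply filter_In in Hn as [_ Hn].
      apply Nat.leb_le in Hn; lia. }
    apply Rmult_le_compat_l with (r := K) in H; [|lra].
    replace (K * (eps * eps / K)) with (eps * eps) in H by (field; lra). lra.
Qed.

Definition scomp (A B : SeqOp G) : SeqOp G := fun n x => A n (B n x).
Definition sadd (A B : SeqOp G) : SeqOp G := fun n x => vadd G (A n x) (B n x).
Definition sscale (a : Defs.C) (A : SeqOp G) : SeqOp G := fun n x => vscale G a (A n x).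

Lemma OpS_comp A B u : ssupp B -> OpS (scomp A B) u = OpS A (OpS B u).
Proof.
  intros HB. apply functional_extensionality; intros t. unfold OpS at 1 2, scomp.
  destruct (region t) as [n|] eqn:E; auto. f_equal.
  apply functional_extensionality; intros s. unfold Proj at 2, Rsh at 2.
  destruct excluded_middle_informative as [i|i].
  - unfold OpS. rewrite region_shift; auto. rewrite g_mulKr. reflexivity.
  - apply (HB n _ (Proj_supp _ _) s); auto.
Qed.

Lemma OpS_seq_eq A B u : seq_eq G Y A B -> OpS A u = OpS B u.
Proof.
  intros H. apply functional_extensionality; intros t. unfold OpS.
  destruct (region t); auto. rewrite H; auto. apply Proj_supp.
Qed.

Lemma OpS_add A B u : OpS (sadd A B) u = vadd G (OpS A u) (OpS B u).
Proof.
  apply functional_extensionality; intros t. unfold OpS, sadd, vadd. destruct (region t); auto. Csolve.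
Qed.

Lemma OpS_scale a A u : OpS (sscale a A) u = vscale G a (OpS A u).
Proof.
  apply functional_extensionality; intros t. unfold OpS, sscale, vscale. destruct (region t); auto. Csolve.
Qed.

End Main.

Section Inner.
Context {G : Group}.

Lemma inner_lin_l (x y w : Vec G) a l :
  inner G (vadd G x (vscale G a y)) w l = Cadd (inner G x w l) (Cmul a (inner G y w l)).
Proof. induction l; simpl; [Csolve|]. rewrite IHl. unfold vadd, vscale. Csolve. Qed.

Lemma inner_add_l (x y w : Vec G) l :
  inner G (vadd G x y) w l = Cadd (inner G x w l) (inner G y w l).
Proof. induction l; simpl; [Csolve|]. rewrite IHl. unfold vadd. Csolve. Qed.

Lemma inner_scale_l (x w : Vec G) a l : inner G (vscale G a x) w l = Cmul a (inner G x w l).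
Proof. induction l; simpl; [Csolve|]. rewrite IHl. unfold vscale. Csolve. Qed.

Lemma inner_sub_l (x y w : Vec G) l :
  inner G (vsub G x y) w l = Cadd (inner G x w l) (Copp (inner G y w l)).
Proof. induction l; simpl; [Csolve|]. rewrite IHl. unfold vsub. Csolve. Qed.

Lemma inner_add_r (x y w : Vec G) l :
  inner G x (vadd G y w) l = Cadd (inner G x y l) (inner G x w l).
Proof. induction l; simpl; [Csolve|]. rewrite IHl. unfold vadd. Csolve. Qed.

Lemma inner_scale_r (x w : Vec G) a l : inner G x (vscale G a w) l = Cmul (Cconj a) (inner G x w l).
Proof. induction l; simpl; [Csolve|]. rewrite IHl. unfold vscale. Csolve. Qed.

Lemma inner_sub_r (x y w : Vec G) l :
  inner G x (vsub G y w) l = Cadd (inner G x y l) (Copp (inner G x w l)).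
Proof. induction l; simpl; [Csolve|]. rewrite IHl. unfold vsub. Csolve. Qed.

Lemma inner_conj (x y : Vec G) l : inner G x y l = Cconj (inner G y x l).
Proof. induction l; simpl; [Csolve|]. rewrite IHl. Csolve. Qed.

Lemma inner_ext (x x' y y' : Vec G) l : (forall t, In t l -> x t = x' t /\ y t = y' t) ->
  inner G x y l = inner G x' y' l.
Proof.
  induction l; simpl; intros H; auto. destruct (H a (or_introl eq_refl)) as [-> ->].
  rewrite IHl; auto.
Qed.

Lemma inner_self_re (z : Vec G) l : re (inner G z z l) = sumsq G z l.
Proof. induction l; simpl; auto. rewrite IHl. unfold Cnorm2. ring. Qed.

Lemma re_inner_le (x y : Vec G) l t : 0 < t ->
  re (inner G x y l) <= (t * sumsq G x l + sumsq G y l / t) / 2.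
Proof.
  intros Ht. induction l; simpl.
  - unfold Rdiv; lra.
  - assert (H : re (x a) * re (y a) + im (x a) * im (y a) <= (t * Cnorm2 (x a) + Cnorm2 (y a) / t) / 2).
    { unfold Cnorm2.
      assert (E : (t * (re (x a) * re (x a) + im (x a) * im (x a)) + (re (y a) * re (y a) + im (y a) * im (y a)) / t) / 2
                   - (re (x a) * re (y a) + im (x a) * im (y a))
                 = ((t * re (x a) - re (y a)) * (t * re (x a) - re (y a)) + (t * im (x a) - im (y a)) * (t * im (x a) - im (y a))) / (2 * t)).
      { field; lra. }
      assert (0 <= ((t * re (x a) - re (y a)) * (t * re (x a) - re (y a)) + (t * im (x a) - im (y a)) * (t * im (x a) - im (y a))) / (2 * t)).
      { apply Rmult_le_pos. apply Rplus_le_le_0_compat; apply Rle_0_sqr. left; apply Rinv_0_lt_compat; lra. }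
      lra. }
    replace (re (Cadd (Cmul (x a) (Cconj (y a))) (inner G x y l))) with
      ((re (x a) * re (y a) + im (x a) * im (y a)) + re (inner G x y l)) by (simpl; ring).
    assert (E2 : (t * (Cnorm2 (x a) + sumsq G x l) + (Cnorm2 (y a) + sumsq G y l) / t) / 2 =
      (t * Cnorm2 (x a) + Cnorm2 (y a) / t) / 2 + (t * sumsq G x l + sumsq G y l / t) / 2) by (field; lra).
    change (sumsq G x (a :: l)) with (Cnorm2 (x a) + sumsq G x l).
    change (sumsq G y (a :: l)) with (Cnorm2 (y a) + sumsq G y l).
    rewrite E2. lra.
Qed.

Definition evec (t : G) : Vec G := fun s => if excluded_middle_informative (s = t) then C1 else C0.

Lemma inner_point_in (f w : Vec G) p L : NoDup L -> In p L -> (forall s, In s L -> s <> p -> f s = C0) ->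
  inner G f w L = Cmul (f p) (Cconj (w p)).
Proof.
  induction 1 as [|x l Hx Hl IHNoDup]; simpl; intros Hin H0; [tauto|].
  destruct Hin as [->|Hin].
  - rewrite (inner_ext f (fun _ => C0) w w); [|intros t Ht; split; auto; apply H0; auto; intros ->; contradiction].
    assert (Z : forall l, inner G (fun _ => C0) w l = C0) by (induction l0; simpl; [|rewrite IHl0]; Csolve).
    rewrite Z. Csolve.
  - rewrite IHNoDup; auto. rewrite (H0 x); [Csolve|left; auto|]. intros ->; contradiction.
Qed.

Lemma inner_point_out (f w : Vec G) L : (forall s, In s L -> f s = C0) -> inner G f w L = C0.
Proof. induction L; simpl; intros H; [auto|]. rewrite H, IHL; auto. Csolve. Qed.

End Inner.


Section Adj.
Context (G : Group) (Y : nat -> list G) (hY_nodup : forall n, NoDup (Y n)).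

Lemma Cconj_inj a b : Cconj a = Cconj b -> a = b.
Proof. intros H. apply C_ext; [apply (f_equal re) in H|apply (f_equal im) in H]; simpl in H; lra. Qed.

Lemma inner_evec (t : G) (x : Vec G) n : In t (Y n) -> inner G (evec t) x (Y n) = Cconj (x t).
Proof.
  intros Ht. rewrite (inner_point_in _ _ t); auto.
  - unfold evec. destruct excluded_middle_informative; [|congruence]. unfold C1. Csolve.
  - intros s _ Hs. unfold evec. destruct excluded_middle_informative; congruence.
Qed.

Lemma evec_supp t n : In t (Y n) -> supp_in G (evec t) (Y n).
Proof. intros Ht s Hs. unfold evec. destruct excluded_middle_informative; subst; tauto. Qed.

Lemma adj_uniq A C1 C2 : ssupp G Y C1 -> ssupp G Y C2 -> is_adj G Y A C1 -> is_adj G Y A C2 -> seq_eq G Y C1 C2.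
Proof.
  intros H1 H2 A1 A2 n w Hw. apply functional_extensionality; intros t.
  destruct (classic (In t (Y n))) as [Ht|Ht].
  - apply Cconj_inj. rewrite <- !(inner_evec t _ n Ht).
    rewrite <- A1, <- A2; auto; apply evec_supp; auto.
  - rewrite (H1 n w Hw t Ht), (H2 n w Hw t Ht). reflexivity.
Qed.

Lemma is_adj_sym A C : is_adj G Y A C -> is_adj G Y C A.
Proof.
  intros H n u w Hu Hw. rewrite inner_conj, <- H; auto. rewrite <- inner_conj. reflexivity.
Qed.

Definition adjF (A : SeqOp G) : SeqOp G := fun n w t =>
  if excluded_middle_informative (In t (Y n)) then Cconj (inner G (A n (evec t)) w (Y n)) else C0.

Definition rhsF (A : SeqOp G) n (u w : Vec G) (L : list G) : Defs.C :=
  fold_right (fun t acc => Cadd (Cmul (u t) (inner G (A n (evec t)) w (Y n))) acc) C0 L.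

Lemma supp_mono (u : Vec G) L L' : incl L L' -> supp_in G u L -> supp_in G u L'.
Proof. intros I H t Ht. apply H. intros Hin; apply Ht, I; auto. Qed.

Lemma slin_zero A n : slin G Y A -> A n (fun _ => C0) = fun _ => C0.
Proof.
  intros HL. set (z := fun _ : G => C0).
  assert (E : vadd G z (vscale G (mkC (-1) 0) z) = z).
  { apply functional_extensionality; intros t; unfold z, vadd, vscale. Csolve. }
  pose proof (HL n z z (mkC (-1) 0)) as H. rewrite E in H.
  apply functional_extensionality; intros t. unfold z at 2.
  assert (Hs : supp_in G z (Y n)) by (intros s _; reflexivity).
  specialize (H Hs Hs). apply (f_equal (fun f => f t)) in H. unfold vadd, vscale in H.
  apply C_ext; [apply (f_equal re) in H|apply (f_equal im) in H]; simpl in H |- *; lra.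
Qed.

Lemma adj_lhs A n u w L : slin G Y A -> NoDup L -> incl L (Y n) ->
  inner G (A n (Proj G L u)) w (Y n) = rhsF A n u w L.
Proof.
  intros HL. induction 1 as [|x L Hx HN IH]; intros I; simpl.
  - assert (E : Proj G nil u = fun _ => C0) by (apply functional_extensionality; intros t; apply Proj_out; simpl; tauto).
    rewrite E, slin_zero; auto. apply inner_point_out; auto.
  - assert (E : Proj G (x :: L) u = vadd G (Proj G L u) (vscale G (u x) (evec x))).
    { apply functional_extensionality; intros s. unfold vadd, vscale, evec.
      destruct (excluded_middle_informative (s = x)) as [->|Hs].
      - rewrite Proj_in by (left; auto). rewrite Proj_out by auto. unfold C1; Csolve.
      - destruct (classic (In s L)) as [Hi|Hi].
        + rewrite !Proj_in by (try right; auto). Csolve.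
        + rewrite !Proj_out; [Csolve|auto|]. simpl; intros [->|?]; auto. }
    rewrite E, HL.
    + rewrite inner_lin_l, IH. Csolve. intros t Ht; apply I; right; auto.
    + apply (supp_mono _ L). intros t Ht; apply I; right; auto. apply Proj_supp.
    + apply evec_supp. apply I; left; auto.
Qed.

Lemma adj_rhs A n u w L : incl L (Y n) -> inner G u (adjF A n w) L = rhsF A n u w L.
Proof.
  induction L as [|x L IH]; simpl; intros I; auto. rewrite IH by (intros t Ht; apply I; right; auto).
  unfold adjF. destruct excluded_middle_informative as [_|Hn]; [|exfalso; apply Hn, I; left; auto].
  destruct (inner G (A n (evec x)) w (Y n)). Csolve.
Qed.

Lemma Proj_id (u : Vec G) L : supp_in G u L -> Proj G L u = u.
Proof.
  intros H. apply functional_extensionality; intros t. destruct (classic (In t L)).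
  apply Proj_in; auto. rewrite Proj_out, H; auto.
Qed.

Lemma adj_correct A : slin G Y A -> is_adj G Y A (adjF A).
Proof.
  intros HL n u w Hu Hw. rewrite <- (Proj_id u (Y n) Hu) at 1.
  rewrite adj_lhs, adj_rhs; auto; apply incl_refl.
Qed.

Lemma adj_bound A C K : ssupp G Y C -> is_adj G Y A C -> 0 < K ->
  (forall n u, supp_in G u (Y n) -> sumsq G (A n u) (Y n) <= K * sumsq G u (Y n)) ->
  forall n w, supp_in G w (Y n) -> sumsq G (C n w) (Y n) <= K * sumsq G w (Y n).
Proof.
  intros HC Ha HK HA n w Hw. set (z := C n w).
  assert (Hz : supp_in G z (Y n)) by (apply HC; auto).
  assert (E : inner G (A n z) w (Y n) = inner G z z (Y n)) by (apply Ha; auto).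
  pose proof (re_inner_le (A n z) w (Y n) (/ K) ltac:(apply Rinv_0_lt_compat; lra)) as H.
  rewrite E, inner_self_re in H. specialize (HA n z Hz).
  assert (/ K * sumsq G (A n z) (Y n) <= sumsq G z (Y n)).
  { apply Rmult_le_compat_l with (r := / K) in HA; [|left; apply Rinv_0_lt_compat; lra].
    replace (/ K * (K * sumsq G z (Y n))) with (sumsq G z (Y n)) in HA by (field; lra). auto. }
  replace (sumsq G w (Y n) / / K) with (K * sumsq G w (Y n)) in H by (field; lra).
  lra.
Qed.

Lemma adjF_supp A : ssupp G Y (adjF A).
Proof. intros n w _ t Ht. unfold adjF. destruct excluded_middle_informative; tauto. Qed.

Lemma adjF_inF A : in_F G Y A -> in_F G Y (adjF A).
Proof.
  intros HF. pose proof HF as [Hs [HL [M HM]]].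
  split; [apply adjF_supp|split].
  - intros n u w a Hu Hw. apply functional_extensionality; intros t.
    transitivity (Cadd (adjF A n u t) (Cmul a (adjF A n w t))); [|reflexivity]. unfold adjF.
    destruct excluded_middle_informative.
    + rewrite inner_add_r, inner_scale_r. destruct a. Csolve.
    + Csolve.
  - exists (Rabs M + 1). apply (adj_bound A); auto.
    + apply adjF_supp.
    + apply adj_correct; intros n u w a; apply HL.
    + pose proof (Rabs_pos M); lra.
    + intros n u Hu. eapply Rle_trans; [apply HM; auto|].
      pose proof (sumsq_nonneg u (Y n)). pose proof (Rle_abs M). nra.
Qed.

Lemma is_adj_add A B C D : is_adj G Y A C -> is_adj G Y B D -> is_adj G Y (sadd G A B) (sadd G C D).
Proof. intros H1 H2 n u w Hu Hw. unfold sadd. rewrite inner_add_l, inner_add_r, H1, H2; auto. Qed.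

Lemma is_adj_scale a A C : is_adj G Y A C -> is_adj G Y (sscale G a A) (sscale G (Cconj a) C).
Proof.
  intros H n u w Hu Hw. unfold sscale. rewrite inner_scale_l, inner_scale_r, H; auto.
  destruct a; Csolve.
Qed.

Lemma is_adj_comp A B C D : ssupp G Y B -> ssupp G Y C -> is_adj G Y A C -> is_adj G Y B D ->
  is_adj G Y (scomp G A B) (scomp G D C).
Proof. intros HB HC H1 H2 n u w Hu Hw. unfold scomp. rewrite H1, H2; auto. Qed.

Lemma is_adj_sub A B C D : is_adj G Y A C -> is_adj G Y B D -> is_adj G Y (sdiff G A B) (sdiff G C D).
Proof. intros H1 H2 n u w Hu Hw. unfold sdiff. rewrite inner_sub_l, inner_sub_r, H1, H2; auto. Qed.

Lemma is_adj_eq_r A C D : is_adj G Y A C -> seq_eq G Y C D -> is_adj G Y A D.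
Proof. intros H E n u w Hu Hw. rewrite <- E; auto. Qed.

Lemma is_adj_eq_l A B C : is_adj G Y A C -> seq_eq G Y A B -> is_adj G Y B C.
Proof. intros H E n u w Hu Hw. rewrite <- E; auto. Qed.

End Adj.

Section Band.
Context (G : Group).
Notation "x ** y" := (gmul G x y) (at level 40, left associativity).
Notation "x ^-1" := (ginv G x) (at level 2).

Definition single (a : G -> Defs.C) (r : G) : Op G := fun u t => Cmul (a t) (u (r^-1 ** t)).

Inductive band : Op G -> Prop :=
| band_single a r : bounded_fun G a -> band (single a r)
| band_add D E : band D -> band E -> band (fun u => vadd G (D u) (E u)).

Lemma band_lin D u w c : band D -> D (vadd G u (vscale G c w)) = vadd G (D u) (vscale G c (D w)).
Proof.
  induction 1 as [a r Ha|D E _ IH1 _ IH2].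
  - apply functional_extensionality; intros t. unfold single, vadd, vscale. Csolve.
  - rewrite IH1, IH2. apply functional_extensionality; intros t. unfold vadd, vscale. Csolve.
Qed.

Lemma band_add_lin D u w : band D -> D (vadd G u w) = vadd G (D u) (D w).
Proof.
  intros HD. replace (vadd G u w) with (vadd G u (vscale G C1 w)).
  rewrite band_lin; auto. apply functional_extensionality; intros t. unfold vadd, vscale, C1. Csolve.
  apply functional_extensionality; intros t. unfold vadd, vscale, C1. Csolve.
Qed.

Lemma band_comp D E : band D -> band E -> band (fun u => D (E u)).
Proof.
  intros HD. induction HD as [a r Ha|D1 D2 _ IH1 _ IH2]; intros HE.
  - induction HE as [b s Hb|E1 E2 HE1 IH1 HE2 IH2].
    + replace (fun u => single a r (single b s u)) with (single (fun t => Cmul (a t) (b (r^-1 ** t))) (r ** s)).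
      * apply band_single. destruct Ha as [Ma HMa], Hb as [Mb HMb]. exists (Ma * Mb). intros t.
        rewrite Cnorm2_mul. pose proof (Cnorm2_nonneg (a t)); pose proof (Cnorm2_nonneg (b (r^-1 ** t))).
        apply Rmult_le_compat; auto.
      * apply functional_extensionality; intros u; apply functional_extensionality; intros t.
        unfold single. rewrite g_invM, <- gmul_assoc. Csolve.
    + replace (fun u => single a r (vadd G (E1 u) (E2 u))) with
        (fun u => vadd G (single a r (E1 u)) (single a r (E2 u))).
      * constructor; auto.
      * apply functional_extensionality; intros u. symmetry; apply band_add_lin. constructor; auto.
  - constructor; auto.
Qed.

Lemma band_scale D c : band D -> band (fun u => vscale G c (D u)).
Proof.
  induction 1 as [a r Ha|D E _ IH1 _ IH2].
  - replace (fun u => vscale G c (single a r u)) with (single (fun t => Cmul c (a t)) r).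
    + constructor. destruct Ha as [M HM]. exists (Cnorm2 c * M). intros t. rewrite Cnorm2_mul.
      apply Rmult_le_compat_l; auto. apply Cnorm2_nonneg.
    + apply functional_extensionality; intros u; apply functional_extensionality; intros t.
      unfold single, vscale. Csolve.
  - replace (fun u => vscale G c (vadd G (D u) (E u))) with (fun u => vadd G (vscale G c (D u)) (vscale G c (E u))).
    + constructor; auto.
    + apply functional_extensionality; intros u; apply functional_extensionality; intros t.
      unfold vadd, vscale. Csolve.
Qed.

Lemma norm_le_sq (x : Vec G) K r : (forall l, NoDup l -> sumsq G x l <= K * (r * r)) -> 0 <= K ->
  norm_le G x ((K + 1) * r).
Proof.
  intros H HK l Hl. eapply Rle_trans; [apply H; auto|]. assert (0 <= r * r) by nra. nra.
Qed.

Definition opbound (A : Op G) (K : R) : Prop :=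
  0 <= K /\ forall u r, in_l2 G u -> norm_le G u r -> forall l, NoDup l -> sumsq G (A u) l <= K * (r * r).

Lemma bounded_opbound A : Defs.bounded G A -> exists K, opbound A K.
Proof.
  intros [_ [_ [c Hc]]]. exists (c * c). split. nra.
  intros u r Hu Hr l Hl. specialize (Hc u r Hu Hr l Hl). nra.
Qed.

Lemma l2_of_norm (x : Vec G) r : norm_le G x r -> in_l2 G x.
Proof. intros H. exists (r * r). auto. Qed.

Lemma norm_of_l2 (x : Vec G) : in_l2 G x -> exists r, norm_le G x r.
Proof.
  intros [M HM]. exists (Rabs M + 1). intros l Hl. eapply Rle_trans; [apply HM; auto|].
  pose proof (Rabs_pos M). pose proof (Rle_abs M). nra.
Qed.

Lemma opbound_bounded A K : opbound A K ->
  (forall u w a, in_l2 G u -> in_l2 G w -> A (vadd G u (vscale G a w)) = vadd G (A u) (vscale G a (A w))) ->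
  Defs.bounded G A.
Proof.
  intros [HK H] HL. split; [auto|split].
  - intros u Hu. destruct (norm_of_l2 u Hu) as [r Hr]. exists (K * (r * r)). intros l Hl. apply H; auto.
  - exists (K + 1). intros u r Hu Hr. apply norm_le_sq; auto.
Qed.

Lemma vsub_eq_lin A x y : Defs.bounded G A -> in_l2 G x -> in_l2 G y ->
  vsub G (A x) (A y) = A (vsub G x y).
Proof.
  intros [HL _] Hx Hy.
  replace (vsub G x y) with (vadd G x (vscale G (mkC (-1) 0) y)).
  rewrite HL; auto. apply functional_extensionality; intros t; unfold vsub, vadd, vscale; Csolve.
  apply functional_extensionality; intros t; unfold vsub, vadd, vscale; Csolve.
Qed.

Lemma l2_add (x y : Vec G) : in_l2 G x -> in_l2 G y -> in_l2 G (vadd G x y).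
Proof.
  intros [M1 H1] [M2 H2]. exists (2 * M1 + 2 * M2). intros l Hl.
  pose proof (sumsq_vadd_le x y l). specialize (H1 l Hl); specialize (H2 l Hl). lra.
Qed.

Lemma l2_scale (x : Vec G) c : in_l2 G x -> in_l2 G (vscale G c x).
Proof.
  intros [M H]. exists (Cnorm2 c * Rabs M). intros l Hl. rewrite sumsq_vscale.
  apply Rmult_le_compat_l. apply Cnorm2_nonneg. eapply Rle_trans; [apply H; auto|apply Rle_abs].
Qed.

Lemma l2_sub (x y : Vec G) : in_l2 G x -> in_l2 G y -> in_l2 G (vsub G x y).
Proof.
  intros [M1 H1] [M2 H2]. exists (2 * M1 + 2 * M2). intros l Hl.
  pose proof (sumsq_vsub_le x y l). specialize (H1 l Hl); specialize (H2 l Hl). lra.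
Qed.

Lemma bounded_l2 A x : Defs.bounded G A -> in_l2 G x -> in_l2 G (A x).
Proof. intros [_ [H _]]; auto. Qed.

Lemma bounded_add A B : Defs.bounded G A -> Defs.bounded G B -> Defs.bounded G (fun u => vadd G (A u) (B u)).
Proof.
  intros HA HB. destruct (bounded_opbound A HA) as [KA [HKA HA']]. destruct (bounded_opbound B HB) as [KB [HKB HB']].
  apply (opbound_bounded _ (2 * KA + 2 * KB)).
  - split; [lra|]. intros u r Hu Hr l Hl. eapply Rle_trans; [apply sumsq_vadd_le|].
    specialize (HA' u r Hu Hr l Hl); specialize (HB' u r Hu Hr l Hl). lra.
  - intros u w a Hu Hw. destruct HA as [LA _], HB as [LB _]. rewrite LA, LB; auto.
    apply functional_extensionality; intros t; unfold vadd, vscale; Csolve.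
Qed.

Lemma bounded_scale A c : Defs.bounded G A -> Defs.bounded G (fun u => vscale G c (A u)).
Proof.
  intros HA. destruct (bounded_opbound A HA) as [K [HK HA']].
  apply (opbound_bounded _ (Cnorm2 c * K)).
  - split; [apply Rmult_le_pos; auto; apply Cnorm2_nonneg|]. intros u r Hu Hr l Hl. rewrite sumsq_vscale.
    rewrite Rmult_assoc. apply Rmult_le_compat_l; [apply Cnorm2_nonneg|]. auto.
  - intros u w a Hu Hw. destruct HA as [LA _]. rewrite LA; auto.
    apply functional_extensionality; intros t; unfold vadd, vscale; Csolve.
Qed.

Lemma bounded_comp A B : Defs.bounded G A -> Defs.bounded G B -> Defs.bounded G (fun u => A (B u)).
Proof.
  intros HA HB. destruct (bounded_opbound A HA) as [KA [HKA HA']]. destruct (bounded_opbound B HB) as [KB [HKB HB']].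
  apply (opbound_bounded _ (KA * (KB + 1) * (KB + 1))).
  - split; [apply Rmult_le_pos; [apply Rmult_le_pos|]; lra|]. intros u r Hu Hr l Hl.
    assert (Hn : norm_le G (B u) ((KB + 1) * r)) by (apply norm_le_sq; auto; intros; apply HB'; auto).
    eapply Rle_trans; [apply (HA' _ ((KB + 1) * r)); auto; apply bounded_l2; auto|]. right; ring.
  - intros u w a Hu Hw. destruct HA as [LA [IA _]], HB as [LB [IB _]]. rewrite LB, LA; auto.
Qed.

Lemma bounded_eq A B : Defs.bounded G A -> op_eq G A B -> Defs.bounded G B.
Proof.
  intros [L [I [c Hc]]] E. split; [|split].
  - intros u w a Hu Hw. rewrite <- !E; auto. apply l2_add; auto. apply l2_scale; auto.
  - intros u Hu; rewrite <- E; auto.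
  - exists c; intros u r Hu Hr; rewrite <- E; auto.
Qed.

Lemma sumsq_single a r u l Ma : (forall t, Cnorm2 (a t) <= Ma) ->
  sumsq G (single a r u) l <= Ma * sumsq G u (map (fun t => r^-1 ** t) l).
Proof.
  intros H. induction l; simpl; [lra|]. unfold single at 1. rewrite Cnorm2_mul.
  pose proof (H a0). pose proof (Cnorm2_nonneg (u (r^-1 ** a0))). unfold single in IHl.
  assert (Cnorm2 (a a0) * Cnorm2 (u (r^-1 ** a0)) <= Ma * Cnorm2 (u (r^-1 ** a0))) by (apply Rmult_le_compat_r; auto).
  rewrite Rmult_plus_distr_l. unfold single. lra.
Qed.

Lemma single_bounded a r : bounded_fun G a -> Defs.bounded G (single a r).
Proof.
  intros [Ma HMa]. assert (HM0 : 0 <= Ma) by (eapply Rle_trans; [apply (Cnorm2_nonneg (a (gone G)))|apply HMa]).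
  apply (opbound_bounded _ Ma).
  - split; auto. intros u r0 Hu Hr l Hl. eapply Rle_trans; [apply sumsq_single; eauto|].
    apply Rmult_le_compat_l; auto. apply Hr. apply NoDup_map_inj; auto. intros x y Hxy; eapply g_cancel_l; eauto.
  - intros u w c _ _. apply functional_extensionality; intros t. unfold single, vadd, vscale. Csolve.
Qed.

Lemma band_bounded D : band D -> Defs.bounded G D.
Proof. induction 1. apply single_bounded; auto. apply bounded_add; auto. Qed.

Definition S2 (B : Op G) : Prop :=
  Defs.bounded G B /\ forall eps, eps > 0 -> exists D, band D /\ op_dist_le G B D eps.

Lemma dist_triangle A B D e1 e2 : op_dist_le G A B e1 -> op_dist_le G B D e2 ->
  forall u r, in_l2 G u -> norm_le G u r -> forall l, NoDup l ->
  sumsq G (vsub G (A u) (D u)) l <= 2 * (e1 * r) * (e1 * r) + 2 * (e2 * r) * (e2 * r).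
Proof.
  intros H1 H2 u r Hu Hr l Hl.
  replace (vsub G (A u) (D u)) with (vadd G (vsub G (A u) (B u)) (vsub G (B u) (D u))).
  - eapply Rle_trans; [apply sumsq_vadd_le|]. specialize (H1 u r Hu Hr l Hl); specialize (H2 u r Hu Hr l Hl). lra.
  - apply functional_extensionality; intros t; unfold vadd, vsub; Csolve.
Qed.

Lemma S2_closed : closed_subalg G S2.
Proof.
  split; [|split; [|split; [|split; [|split]]]].
  - intros A [H _]; auto.
  - intros A B [HA AA] [HB AB]. split; [apply bounded_add; auto|]. intros eps Heps.
    destruct (AA (eps / 2)) as [D1 [HD1 H1]]; [lra|]. destruct (AB (eps / 2)) as [D2 [HD2 H2]]; [lra|].
    exists (fun u => vadd G (D1 u) (D2 u)). split; [constructor; auto|].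
    intros u r Hu Hr l Hl.
    replace (vsub G (vadd G (A u) (B u)) (vadd G (D1 u) (D2 u))) with (vadd G (vsub G (A u) (D1 u)) (vsub G (B u) (D2 u))).
    + eapply Rle_trans; [apply sumsq_vadd_le|]. specialize (H1 u r Hu Hr l Hl); specialize (H2 u r Hu Hr l Hl).
      assert (2 * (eps / 2 * r * (eps / 2 * r)) + 2 * (eps / 2 * r * (eps / 2 * r)) = eps * r * (eps * r)) by field. lra.
    + apply functional_extensionality; intros t; unfold vadd, vsub; Csolve.
  - intros c A [HA AA]. split; [apply bounded_scale; auto|]. intros eps Heps.
    set (N := Cnorm2 c). assert (HN : 0 <= N) by apply Cnorm2_nonneg.
    destruct (AA (eps / (N + 1))) as [D [HD H]]. { apply Rdiv_lt_0_compat; lra. }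
    exists (fun u => vscale G c (D u)). split; [apply band_scale; auto|].
    intros u r Hu Hr l Hl.
    replace (vsub G (vscale G c (A u)) (vscale G c (D u))) with (vscale G c (vsub G (A u) (D u))).
    + rewrite sumsq_vscale. specialize (H u r Hu Hr l Hl). fold N.
      assert (E : eps / (N + 1) * r * (eps / (N + 1) * r) = (eps * r) * (eps * r) / ((N + 1) * (N + 1))) by (field; lra).
      rewrite E in H.
      assert (Q : N * ((eps * r) * (eps * r) / ((N + 1) * (N + 1))) <= eps * r * (eps * r)).
      { assert (0 <= (eps * r) * (eps * r)) by nra.
        replace (N * ((eps * r) * (eps * r) / ((N + 1) * (N + 1)))) with ((eps * r) * (eps * r) * (N / ((N + 1) * (N + 1)))) by (field; lra).
        assert (N / ((N + 1) * (N + 1)) <= 1).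
        { apply Rmult_le_reg_r with ((N + 1) * (N + 1)). nra. unfold Rdiv. rewrite Rmult_assoc, Rinv_l by nra. nra. }
        nra. }
      eapply Rle_trans; [|apply Q]. apply Rmult_le_compat_l; auto.
    + apply functional_extensionality; intros t; unfold vscale, vsub; Csolve.
  - intros A B [HA AA] [HB AB]. split; [apply bounded_comp; auto|]. intros eps Heps.
    destruct (bounded_opbound A HA) as [KA [HKA HA']]. destruct (bounded_opbound B HB) as [KB [HKB HB']].
    set (KE := 2 * KB + 2).
    set (Q := 2 * KA + 2 * (KE + 1) * (KE + 1) + 1).
    assert (HQ : 1 <= Q) by (unfold Q, KE; nra).
    set (d := Rmin 1 (eps / (Q + 1))).
    assert (Hd0 : 0 < d) by (apply Rmin_pos; [lra|apply Rdiv_lt_0_compat; lra]).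
    assert (Hd1 : d <= 1) by apply Rmin_l.
    assert (Hd2 : d <= eps / (Q + 1)) by apply Rmin_r.
    destruct (AB d Hd0) as [E [HE HBE]]. destruct (AA d Hd0) as [D [HD HAD]].
    exists (fun u => D (E u)). split; [apply band_comp; auto|].
    intros u r Hu Hr l Hl.
    assert (HEb := band_bounded E HE).
    assert (HBu : in_l2 G (B u)) by (apply bounded_l2; auto).
    assert (HEu : in_l2 G (E u)) by (apply bounded_l2; auto).
    assert (HnE : norm_le G (E u) ((KE + 1) * r)).
    { apply norm_le_sq; [|unfold KE; lra]. intros l' Hl'.
      replace (E u) with (vsub G (B u) (vsub G (B u) (E u))) by
        (apply functional_extensionality; intros t; unfold vsub; Csolve).
      eapply Rle_trans; [apply sumsq_vsub_le|].
      specialize (HB' u r Hu Hr l' Hl'). specialize (HBE u r Hu Hr l' Hl').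
      assert (d * r * (d * r) <= r * r).
      { replace (d * r * (d * r)) with ((d * d) * (r * r)) by ring.
        rewrite <- (Rmult_1_l (r * r)) at 2. apply Rmult_le_compat_r. nra. nra. }
      unfold KE. replace ((2 * KB + 2) * (r * r)) with (2 * (KB * (r * r)) + 2 * (r * r)) by ring. lra. }
    replace (vsub G (A (B u)) (D (E u))) with (vadd G (A (vsub G (B u) (E u))) (vsub G (A (E u)) (D (E u)))).
    + eapply Rle_trans; [apply sumsq_vadd_le|].
      assert (H1 : sumsq G (A (vsub G (B u) (E u))) l <= KA * (d * r * (d * r))).
      { apply HA'; auto; try (apply l2_sub; auto); try (intros l' Hl'; apply HBE; auto). }
      assert (H2 : sumsq G (vsub G (A (E u)) (D (E u))) l <= d * ((KE + 1) * r) * (d * ((KE + 1) * r))).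
      { apply HAD; auto. }
      assert (H3 : d * d <= eps * eps / ((Q + 1) * (Q + 1))).
      { assert (d * d <= (eps / (Q + 1)) * (eps / (Q + 1))) by nra.
        replace (eps * eps / ((Q + 1) * (Q + 1))) with ((eps / (Q + 1)) * (eps / (Q + 1))) by (field; lra). auto. }
      assert (H4 : eps * eps / ((Q + 1) * (Q + 1)) * Q <= eps * eps).
      { replace (eps * eps / ((Q + 1) * (Q + 1)) * Q) with (eps * eps * (Q / ((Q + 1) * (Q + 1)))) by (field; lra).
        assert (Q / ((Q + 1) * (Q + 1)) <= 1).
        { apply Rmult_le_reg_r with ((Q + 1) * (Q + 1)). nra. unfold Rdiv. rewrite Rmult_assoc, Rinv_l by nra. nra. }
        nra. }
      assert (Hrr : 0 <= r * r) by nra.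
      assert (T : 2 * (KA * (d * r * (d * r))) + 2 * (d * ((KE + 1) * r) * (d * ((KE + 1) * r)))
                  <= (d * d) * Q * (r * r)) by (unfold Q; nra).
      assert ((d * d) * Q * (r * r) <= eps * eps * (r * r)).
      { apply Rmult_le_compat_r; auto. eapply Rle_trans; [|apply H4]. apply Rmult_le_compat_r; lra. }
      nra.
    + rewrite <- (vsub_eq_lin A (B u) (E u)); auto. apply functional_extensionality; intros t; unfold vadd, vsub; Csolve.
  - intros A B [HA AA] E. split; [eapply bounded_eq; eauto|]. intros eps Heps.
    destruct (AA eps Heps) as [D [HD H]]. exists D; split; auto. intros u r Hu Hr. rewrite <- E; auto.
  - intros A HA Happ. split; auto. intros eps Heps.
    destruct (Happ (eps / 2)) as [B [[HB AB] H1]]; [lra|]. destruct (AB (eps / 2)) as [D [HD H2]]; [lra|].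
    exists D; split; auto. intros u r Hu Hr l Hl.
    eapply Rle_trans; [apply (dist_triangle A B D (eps / 2) (eps / 2) H1 H2 u r); auto|].
    right; field.
Qed.

Lemma op_dist_self A eps : op_dist_le G A A eps.
Proof.
  intros u r _ _ l _. rewrite (sumsq_zero _ l). nra. intros t _. unfold vsub. Csolve.
Qed.

Lemma BDO_S2 B : BDO G B -> S2 B.
Proof.
  intros HB. apply HB; [apply S2_closed| |].
  - intros r. assert (E : Lsh G r = single (fun _ => C1) r).
    { apply functional_extensionality; intros u; apply functional_extensionality; intros t.
      unfold Lsh, single, C1. Csolve. }
    assert (Hb : bounded_fun G (fun _ : G => C1)) by (exists 1; intros; unfold Cnorm2, C1; simpl; lra).
    rewrite E. split. apply single_bounded; auto. intros eps _. exists (single (fun _ => C1) r).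
    split; [constructor; auto|apply op_dist_self].
  - intros a Ha. assert (E : Mult G a = single a (gone G)).
    { apply functional_extensionality; intros u; apply functional_extensionality; intros t.
      unfold Mult, single. rewrite g_inv1, gmul_1l. reflexivity. }
    rewrite E. split. apply single_bounded; auto. intros eps _. exists (single a (gone G)).
    split; [constructor; auto|apply op_dist_self].
Qed.

End Band.

Section InF.
Context (G : Group) (Y : nat -> list G) (hY_nodup : forall n, NoDup (Y n)).

Lemma supp_lin (u w : Vec G) a L : supp_in G u L -> supp_in G w L -> supp_in G (vadd G u (vscale G a w)) L.
Proof. intros Hu Hw t Ht. unfold vadd, vscale. rewrite Hu, Hw; auto. Csolve. Qed.

Lemma inF_add A B : in_F G Y A -> in_F G Y B -> in_F G Y (sadd G A B).
Proof.
  intros HA HB. destruct (inF_sbound G Y A HA) as [K1 [HK1 S1]]. destruct (inF_sbound G Y B HB) as [K2 [HK2 S2']].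
  destruct HA as [SA [LA _]], HB as [SB [LB _]]. split; [|split].
  - intros n u Hu t Ht. unfold sadd, vadd. rewrite (SA n u Hu t Ht), (SB n u Hu t Ht). Csolve.
  - intros n u w a Hu Hw. unfold sadd. rewrite LA, LB; auto.
    apply functional_extensionality; intros t; unfold vadd, vscale; Csolve.
  - exists (2 * K1 + 2 * K2). intros n u Hu. unfold sadd. eapply Rle_trans; [apply sumsq_vadd_le|].
    destruct (S1 n u Hu) as [_ H1]. destruct (S2' n u Hu) as [_ H2]. lra.
Qed.

Lemma inF_scale c A : in_F G Y A -> in_F G Y (sscale G c A).
Proof.
  intros HA. destruct (inF_sbound G Y A HA) as [K [HK S1]]. destruct HA as [SA [LA _]]. split; [|split].
  - intros n u Hu t Ht. unfold sscale, vscale. rewrite (SA n u Hu t Ht). Csolve.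
  - intros n u w a Hu Hw. unfold sscale. rewrite LA; auto.
    apply functional_extensionality; intros t; unfold vadd, vscale; Csolve.
  - exists (Cnorm2 c * K). intros n u Hu. unfold sscale. rewrite sumsq_vscale, Rmult_assoc.
    apply Rmult_le_compat_l; [apply Cnorm2_nonneg|]. apply S1; auto.
Qed.

Lemma inF_comp A B : in_F G Y A -> in_F G Y B -> in_F G Y (scomp G A B).
Proof.
  intros HA HB. destruct (inF_sbound G Y A HA) as [K1 [HK1 S1]]. destruct (inF_sbound G Y B HB) as [K2 [HK2 S2']].
  destruct HA as [SA [LA _]], HB as [SB [LB _]]. split; [|split].
  - intros n u Hu. unfold scomp. apply SA, SB; auto.
  - intros n u w a Hu Hw. unfold scomp. rewrite LB, LA; auto.
  - exists (K1 * K2). intros n u Hu. unfold scomp. destruct (S2' n u Hu) as [Hs H2].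
    destruct (S1 n (B n u) Hs) as [_ H1]. rewrite Rmult_assoc. eapply Rle_trans; [apply H1|].
    apply Rmult_le_compat_l; lra.
Qed.

Lemma inF_seq_eq A B : in_F G Y A -> seq_eq G Y A B -> in_F G Y B.
Proof.
  intros [SA [LA [M HM]]] E. split; [|split].
  - intros n u Hu. rewrite <- E; auto.
  - intros n u w a Hu Hw. rewrite <- !E; auto. apply supp_lin; auto.
  - exists M. intros n u Hu. rewrite <- E; auto.
Qed.

Lemma adj_dist A B C D eps : is_adj G Y A C -> is_adj G Y B D -> ssupp G Y C -> ssupp G Y D ->
  seq_dist_le G Y A B eps -> eps > 0 -> seq_dist_le G Y C D eps.
Proof.
  intros H1 H2 HC HD Hd He n w Hw.
  apply (adj_bound G Y (sdiff G A B) (sdiff G C D) (eps * eps)); auto.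
  - intros m x Hx t Ht. unfold sdiff, vsub. rewrite (HC m x Hx t Ht), (HD m x Hx t Ht). Csolve.
  - apply is_adj_sub; auto.
  - nra.
Qed.

Lemma inF_cstar : (forall B, BDO G B -> in_F G Y (fun n u => Proj G (Y n) (B (Proj G (Y n) u)))) ->
  cstar_subalg G Y (in_F G Y).
Proof.
  intros Hgen. split; [|split; [|split; [|split; [|split; [|split]]]]]; auto.
  - intros A B; apply inF_add.
  - intros a A; apply inF_scale.
  - intros A B; apply inF_comp.
  - intros A B H E; eapply inF_seq_eq; eauto.
Qed.

Definition GB (B : Op G) : SeqOp G := fun n u => Proj G (Y n) (B (Proj G (Y n) u)).

Lemma supp_l2 (u : Vec G) L : NoDup L -> supp_in G u L -> in_l2 G u.
Proof. intros HL Hs. exists (sumsq G u L). intros l Hl. apply sumsq_supp; auto. Qed.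

Lemma Proj_lin L (u w : Vec G) a : Proj G L (vadd G u (vscale G a w)) = vadd G (Proj G L u) (vscale G a (Proj G L w)).
Proof.
  apply functional_extensionality; intros t. unfold Proj, vadd, vscale.
  destruct excluded_middle_informative; auto. Csolve.
Qed.

Lemma supp_norm (u : Vec G) n : supp_in G u (Y n) -> norm_le G u (sqrt (sumsq G u (Y n))).
Proof.
  intros Hs l Hl. rewrite sqrt_sqrt by apply sumsq_nonneg. apply sumsq_supp; auto.
Qed.

Lemma inF_GB B : Defs.bounded G B -> in_F G Y (GB B).
Proof.
  intros HB. destruct (bounded_opbound G B HB) as [K [HK HB']]. split; [|split].
  - intros n u _. apply Proj_supp.
  - intros n u w a Hu Hw. unfold GB. rewrite Proj_lin. destruct HB as [LB _]. rewrite LB.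
    apply Proj_lin. apply (supp_l2 _ (Y n)); auto; apply Proj_supp. apply (supp_l2 _ (Y n)); auto; apply Proj_supp.
  - exists K. intros n u Hu. unfold GB. rewrite sumsq_Proj by apply incl_refl.
    rewrite (Proj_id G u (Y n) Hu).
    replace (K * sumsq G u (Y n)) with (K * (sqrt (sumsq G u (Y n)) * sqrt (sumsq G u (Y n))))
      by (rewrite sqrt_sqrt; auto; apply sumsq_nonneg).
    apply HB'; auto. apply (supp_l2 _ (Y n)); auto. apply supp_norm; auto.
Qed.

Lemma GB_dist B D eps : op_dist_le G B D eps -> seq_dist_le G Y (GB B) (GB D) eps.
Proof.
  intros H n u Hu. unfold GB.
  replace (vsub G (Proj G (Y n) (B (Proj G (Y n) u))) (Proj G (Y n) (D (Proj G (Y n) u))))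
    with (Proj G (Y n) (vsub G (B u) (D u))).
  - rewrite sumsq_Proj by apply incl_refl.
    eapply Rle_trans; [apply (H u (sqrt (sumsq G u (Y n)))); auto|].
    + apply (supp_l2 _ (Y n)); auto.
    + apply supp_norm; auto.
    + right. replace (eps * sqrt (sumsq G u (Y n)) * (eps * sqrt (sumsq G u (Y n)))) with
        (eps * eps * (sqrt (sumsq G u (Y n)) * sqrt (sumsq G u (Y n)))) by ring.
      rewrite sqrt_sqrt; auto. apply sumsq_nonneg.
  - rewrite (Proj_id G u (Y n) Hu). apply functional_extensionality; intros t.
    unfold Proj, vsub. destruct excluded_middle_informative; auto. Csolve.
Qed.

Lemma GB_add D E : seq_eq G Y (GB (fun u => vadd G (D u) (E u))) (sadd G (GB D) (GB E)).
Proof.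
  intros n u _. apply functional_extensionality; intros t. unfold GB, sadd, Proj, vadd.
  destruct excluded_middle_informative; auto. Csolve.
Qed.

End InF.

Section Final.
Context (G : Group) (Y : nat -> list G) (v : nat -> G)
  (hY_nodup : forall n, NoDup (Y n)) (hv : inflating G v Y)
  (S : Op G -> Prop) (hS : closed_subalg G S)
  (hL : forall r, S (Lsh G r)) (hM : forall a, bounded_fun G a -> S (Mult G a)).

Notation "x ** y" := (gmul G x y) (at level 40, left associativity).
Notation "x ^-1" := (ginv G x) (at level 2).
Notation Op' := (OpS G Y v).

Definition TS (A : SeqOp G) : Prop :=
  in_F G Y A /\ S (Op' A) /\ exists C, in_F G Y C /\ is_adj G Y A C /\ S (Op' C).

Lemma S_eq A B : S A -> (forall u, A u = B u) -> S B.
Proof. intros H E. destruct hS as [_ [_ [_ [_ [HE _]]]]]. apply (HE A); auto. intros u _; auto. Qed.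

Lemma S_OpS_limit A : in_F G Y A ->
  (forall eps, eps > 0 -> exists B, in_F G Y B /\ S (Op' B) /\ seq_dist_le G Y A B eps) -> S (Op' A).
Proof.
  intros HA H. destruct hS as [_ [_ [_ [_ [_ HL']]]]]. apply HL'.
  - destruct (inF_sbound G Y A HA) as [K [HK SA]]. apply (OpS_bounded G Y v hY_nodup hv A K); auto.
    lra. apply inF_slin; auto.
  - intros eps He. destruct (H eps He) as [B [HB [SB D]]]. exists (Op' B). split; auto.
    apply OpS_dist; auto; apply inF_ssupp; auto.
Qed.

Lemma TS_cstar : cstar_subalg G Y TS.
Proof.
  destruct hS as [Sb [Sadd [Ssc [Scomp [Seq Slim]]]]].
  split; [|split; [|split; [|split; [|split; [|split]]]]].
  - intros A [H _]; auto.
  - intros A B [HA [SA [C [HC [AC SC]]]]] [HB [SB [D [HD [AD SD]]]]].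
    split; [apply (inF_add G Y A B); auto|split].
    + apply (S_eq (fun u => vadd G (Op' A u) (Op' B u))); auto. intros u. symmetry. apply (OpS_add G Y v A B u).
    + exists (sadd G C D). split; [apply inF_add; auto|split; [apply is_adj_add; auto|]].
      apply (S_eq (fun u => vadd G (Op' C u) (Op' D u))); auto. intros u. symmetry. apply (OpS_add G Y v C D u).
  - intros a A [HA [SA [C [HC [AC SC]]]]].
    split; [apply (inF_scale G Y a A); auto|split].
    + apply (S_eq (fun u => vscale G a (Op' A u))); auto. intros u. symmetry. apply (OpS_scale G Y v a A u).
    + exists (sscale G (Cconj a) C). split; [apply inF_scale; auto|split; [apply is_adj_scale; auto|]].
      apply (S_eq (fun u => vscale G (Cconj a) (Op' C u))); auto. intros u. symmetry. apply (OpS_scale G Y v _ C u).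
  - intros A B [HA [SA [C [HC [AC SC]]]]] [HB [SB [D [HD [AD SD]]]]].
    split; [apply (inF_comp G Y A B); auto|split].
    + apply (S_eq (fun u => Op' A (Op' B u))); auto. intros u. symmetry. apply (OpS_comp G Y v hv A B u).
      apply inF_ssupp; auto.
    + exists (scomp G D C). split; [apply inF_comp; auto|split; [apply is_adj_comp; auto; apply inF_ssupp; auto|]].
      apply (S_eq (fun u => Op' D (Op' C u))); auto. intros u. symmetry. apply (OpS_comp G Y v hv D C u).
      apply inF_ssupp; auto.
  - intros A A' [HA [SA [C [HC [AC SC]]]]] HA' AA'.
    assert (E : seq_eq G Y C A') by (apply (adj_uniq G Y hY_nodup A); auto; apply inF_ssupp; auto).
    split; auto. split.
    + apply (S_eq (Op' C)); auto. intros u. apply OpS_seq_eq; auto.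
    + exists A. split; auto. split; auto. apply is_adj_sym; auto.
  - intros A B [HA [SA [C [HC [AC SC]]]]] E. split; [apply (inF_seq_eq G Y A B HA E)|split].
    + apply (S_eq (Op' A)); auto. intros u; apply OpS_seq_eq; auto.
    + exists C. split; auto. split; auto. apply (is_adj_eq_l G Y A B C AC E).
  - intros A HA H. split; auto. split.
    + apply S_OpS_limit; auto. intros eps He. destruct (H eps He) as [B [[HB [SB _]] D]]. exists B; auto.
    + exists (adjF G Y A). split; [apply adjF_inF; auto|split; [apply adj_correct; auto; apply inF_slin; auto|]].
      apply S_OpS_limit; [apply adjF_inF; auto|]. intros eps He.
      destruct (H eps He) as [B [[HB [SB [C [HC [AC SC]]]]] D]]. exists C. split; auto. split; auto.
      apply (adj_dist G Y A B); auto.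
      apply adj_correct; auto; apply inF_slin; auto. apply adjF_supp. apply inF_ssupp; auto.
Qed.

Lemma grp_shift r t n : (r ** (t ** v n)) ** (v n)^-1 = r ** t.
Proof. rewrite gmul_assoc. apply g_mulKr'. Qed.

Definition fsingle (a : G -> Defs.C) (r : G) : G -> Defs.C := fun t =>
  match region G Y v t with
  | Some n => if excluded_middle_informative (In (r^-1 ** (t ** v n)) (Y n)) then a (t ** v n) else C0
  | None => C0
  end.

Definition fadj (a : G -> Defs.C) (r : G) : G -> Defs.C := fun t =>
  match region G Y v t with
  | Some n => if excluded_middle_informative (In (r ** (t ** v n)) (Y n)) then Cconj (a (r ** (t ** v n))) else C0
  | None => C0
  end.

Definition Cadj (a : G -> Defs.C) (r : G) : SeqOp G := fun n w t =>
  if excluded_middle_informative (In t (Y n)) then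
    (if excluded_middle_informative (In (r ** t) (Y n)) then Cmul (Cconj (a (r ** t))) (w (r ** t)) else C0)
  else C0.

Lemma OpS_single a r u : Op' (GB G Y (single G a r)) u = Mult G (fsingle a r) (Lsh G r u).
Proof.
  apply functional_extensionality; intros t. unfold OpS, GB, Mult, Lsh, fsingle.
  destruct (region G Y v t) as [n|] eqn:E; [|Csolve].
  assert (Ht : In (t ** v n) (Y n)) by (apply (region_spec G Y v hv); auto).
  rewrite Proj_in by auto. unfold single.
  destruct (excluded_middle_informative (In (r^-1 ** (t ** v n)) (Y n))) as [H|H].
  - rewrite !Proj_in by auto. unfold Rsh. rewrite grp_shift. reflexivity.
  - rewrite Proj_out by auto. Csolve.
Qed.

Lemma OpS_Cadj a r u : Op' (Cadj a r) u = Mult G (fadj a r) (Lsh G (r^-1) u).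
Proof.
  apply functional_extensionality; intros t. unfold OpS, Cadj, Mult, Lsh, fadj. rewrite g_invinv.
  destruct (region G Y v t) as [n|] eqn:E; [|Csolve].
  assert (Ht : In (t ** v n) (Y n)) by (apply (region_spec G Y v hv); auto).
  destruct excluded_middle_informative as [_|Hn]; [|contradiction].
  destruct (excluded_middle_informative (In (r ** (t ** v n)) (Y n))) as [H|H].
  - rewrite Proj_in by auto. unfold Rsh. rewrite grp_shift. reflexivity.
  - Csolve.
Qed.

Lemma bf_fsingle a r : bounded_fun G a -> bounded_fun G (fsingle a r).
Proof.
  intros [M HM]. assert (0 <= M) by (eapply Rle_trans; [apply (Cnorm2_nonneg (a (gone G)))|apply HM]).
  exists M. intros t. unfold fsingle. destruct (region G Y v t); [destruct excluded_middle_informative|]; auto;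
  rewrite Cnorm2_C0; auto.
Qed.

Lemma bf_fadj a r : bounded_fun G a -> bounded_fun G (fadj a r).
Proof.
  intros [M HM]. assert (0 <= M) by (eapply Rle_trans; [apply (Cnorm2_nonneg (a (gone G)))|apply HM]).
  exists M. intros t. unfold fadj. destruct (region G Y v t); [destruct excluded_middle_informative|];
  try (rewrite Cnorm2_C0; auto). rewrite Cnorm2_conj; auto.
Qed.

Lemma adjF_single a r : seq_eq G Y (adjF G Y (GB G Y (single G a r))) (Cadj a r).
Proof.
  intros n w Hw. apply functional_extensionality; intros t. unfold adjF, Cadj.
  destruct (excluded_middle_informative (In t (Y n))) as [Ht|Ht]; [|reflexivity].
  assert (Z : forall s, In s (Y n) -> s <> r ** t -> GB G Y (single G a r) n (evec t) s = C0).
  { intros s Hs Hne. unfold GB, single. rewrite Proj_in by auto.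
    destruct (excluded_middle_informative (In (r^-1 ** s) (Y n))).
    - rewrite Proj_in by auto. unfold evec. destruct excluded_middle_informative as [e|e]; [|Csolve].
      exfalso; apply Hne. rewrite <- e. symmetry; apply g_mulKl'.
    - rewrite Proj_out by auto. Csolve. }
  destruct (excluded_middle_informative (In (r ** t) (Y n))) as [Hr|Hr].
  - rewrite (inner_point_in _ _ (r ** t)); auto.
    unfold GB, single. rewrite Proj_in by auto. rewrite g_mulKl. rewrite Proj_in by auto.
    unfold evec. destruct excluded_middle_informative as [_|e]; [|congruence].
    unfold C1. destruct (a (r ** t)), (w (r ** t)). Csolve.
  - rewrite inner_point_out. Csolve. intros s Hs. apply Z; auto. intros ->; contradiction.
Qed.

Lemma TS_single a r : bounded_fun G a -> TS (GB G Y (single G a r)).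
Proof.
  intros Ha. destruct hS as [Sb [Sadd [Ssc [Scomp [Seq Slim]]]]].
  assert (HF : in_F G Y (GB G Y (single G a r))) by (apply inF_GB; auto; apply single_bounded; auto).
  split; auto. split.
  - apply (S_eq (fun u => Mult G (fsingle a r) (Lsh G r u))); [apply Scomp; auto; apply hM, bf_fsingle; auto|].
    intros u; symmetry; apply OpS_single.
  - exists (Cadj a r). split; [|split].
    + apply (inF_seq_eq G Y (adjF G Y (GB G Y (single G a r)))). apply adjF_inF; auto. apply adjF_single.
    + apply (is_adj_eq_r G Y _ (adjF G Y (GB G Y (single G a r)))). apply adj_correct; auto.
      apply inF_slin; auto. apply adjF_single.
    + apply (S_eq (fun u => Mult G (fadj a r) (Lsh G (r^-1) u))); [apply Scomp; auto; apply hM, bf_fadj; auto|].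
      intros u; symmetry; apply OpS_Cadj.
Qed.

Lemma TS_band D : band G D -> TS (GB G Y D).
Proof.
  pose proof TS_cstar as [_ [Tadd [_ [_ [_ [Teq _]]]]]].
  induction 1 as [a r Ha|D E _ IH1 _ IH2].
  - apply TS_single; auto.
  - apply (Teq (sadd G (GB G Y D) (GB G Y E))). apply Tadd; auto.
    intros n u Hu. symmetry. apply GB_add; auto.
Qed.

Lemma TS_BDO B : BDO G B -> TS (GB G Y B).
Proof.
  intros HB. destruct (BDO_S2 G B HB) as [Hb Happ].
  pose proof TS_cstar as [_ [_ [_ [_ [_ [_ Tlim]]]]]].
  apply Tlim. apply inF_GB; auto. intros eps He. destruct (Happ eps He) as [D [HD Hd]].
  exists (GB G Y D). split. apply TS_band; auto. apply GB_dist; auto.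
Qed.

End Final.

Theorem mainTheorem5 (G : Group) (Y : nat -> list G) (v : nat -> G) (A : SeqOp G)
  (hY_nodup : forall n, NoDup (Y n))
  (hY_incr : forall n t, In t (Y n) -> In t (Y (S n)))
  (hY_union : forall t : G, exists n, In t (Y n))
  (hv : inflating G v Y)
  (hA : S_Y_BDO G Y A) :
  exists B : Op G, strong_sum G (Op_term G Y v A) B /\ BDO G B.
Proof.
  exists (OpS G Y v A). split.
  - apply strong_sum_OpS; auto. apply hA. apply inF_cstar; auto.
    intros B HB. apply inF_GB; auto. apply (BDO_S2 G B HB).
    intros B HB. apply inF_GB; auto. apply (BDO_S2 G B HB).
  - intros S hS hL hM.
    assert (H : TS G Y v S A).
    { apply hA. apply TS_cstar; auto. intros B HB. apply (TS_BDO G Y v hY_nodup hv S hS hL hM B HB). }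
    destruct H as [_ [H _]]. exact H.
Qed.
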